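(* Let $n\ge 3$ and let $T_{W_n}(x,y)$ be the Tutte polynomial of the wheel graph $W_n$. Then $$1+T_{W_n}(1,x)=\sum_{k\ge0}a_{k,n}x^k,$$ where $a_{k,n}$ is the number of subgraphs of the cycle graph $C_n$ with exactly $k$ edges (a subgraph being a pair $(A,E_A)$ with $A\subseteq[n]$ non-empty and $E_A$ a set of edges of $C_n$ with both endpoints in $A$).
   Context: $C_n$ is the cycle graph on $[n]=\{1,\ldots,n\}$ with edges $\{i,i+1\}$ ($1\le i<n$) and $\{n,1\}$; $W_n$ is obtained from $C_n$ by adding a vertex $0$ adjacent to all vertices of $[n]$. $T_G(x,y)$ is the standard bivariate Tutte polynomial. *)

(* Defs.v *)
From mathcomp Require Import all_boot all_order all_algebra.
Set Implicit Arguments. Unset Strict Implicit. Unset Printing Implicit Defensive.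
Import GRing.Theory.
Local Open Scope ring_scope.

(* A finite simple graph is given by a vertex finType T and an adjacency
   relation adj (assumed symmetric, loops ignored). *)
Definition edges (T : finType) (adj : rel T) : {set {set T}} :=
  [set e : {set T} | [exists u, exists v, [&& u != v, adj u v & e == [set u; v]]]].

Definition ncomp (T : finType) (A : {set {set T}}) : nat :=
  n_comp (connect (fun u v => [set u; v] \in A)) [set: T].

Definition rk (T : finType) (A : {set {set T}}) : nat := (#|T| - ncomp A)%N.

(* Taking R = {poly {poly int}} and x, y the two variables gives the formal
   bivariate polynomial. *)
Definition tutte (R : comNzRingType) (T : finType) (adj : rel T) (x y : R) : R :=
  \sum_(A in powerset (edges adj))
     (x - 1) ^+ (rk (edges adj) - rk A) * (y - 1) ^+ (#|A| - rk A).

(* Cycle C_n on vertices 1..n (edges {i,i+1}, 1<=i<n, and {n,1}),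
   realised inside 'I_n.+1 (vertex 0 is not a vertex of C_n). *)
Definition cyc_adj (n : nat) : rel nat := fun i j =>
  [&& (1 <= i <= n)%N, (1 <= j <= n)%N &
      [|| j == i.+1, i == j.+1, (i == 1%N) && (j == n) | (i == n) && (j == 1%N)]].

Definition wheel_adj (n : nat) : rel 'I_n.+1 := fun i j =>
  [|| cyc_adj n i j, (i == 0 :> nat) && (1 <= j)%N | (j == 0 :> nat) && (1 <= i)%N].

Definition cycle_adj (n : nat) : rel 'I_n.+1 := fun i j => cyc_adj n i j.

Definition a_kn (k n : nat) : nat :=
  #|[set AE : {set 'I_n.+1} * {set {set 'I_n.+1}} |
      [&& AE.1 != set0, ord0 \notin AE.1,
          AE.2 \subset edges (@cycle_adj n),
          [forall e in AE.2, e \subset AE.1] & #|AE.2| == k]]|.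

(* Main.v *)
Set Warnings "-all".
Require Import Defs.
From mathcomp Require Import all_boot all_order all_algebra zify.
Section Gen.
Variables (T : finType) (r : rel T).
Hypothesis rsym : symmetric r.

Lemma connect_connect x y : connect (connect r) x y = connect r x y.
Proof.
apply/idP/idP; last by move=> h; apply: connect1.
by apply: (connect_sub (e := connect r) (e' := r)).
Qed.

Lemma csym : connect_sym (connect r).
Proof.
apply: sym_connect_sym => x y; exact: (sym_connect_sym rsym).
Qed.

Lemma ncomp_split x0 :
  n_comp (connect r) [set: T] = 1 + n_comp (connect r) [predC connect r x0].
Proof.
rewrite (eq_n_comp_r (a' := T)); last by move=> z; rewrite !inE.
rewrite (n_compC (connect (connect r) x0)) n_comp_connect; last exact: csym.
congr (_ + _); apply: eq_n_comp_r => z; by rewrite !inE connect_connect.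
Qed.

Lemma ncomp_gt0 : 0 < n_comp (connect r) [set: T] \/ #|T| = 0.
Proof.
case: (pickP T) => [x0 _|h]; last by right; apply: eq_card0.
by left; rewrite (ncomp_split x0).
Qed.

Lemma ncomp1_conn x0 : n_comp (connect r) [set: T] = 1 -> forall v, connect r x0 v.
Proof.
rewrite (ncomp_split x0) => /eqP; rewrite -{2}(addn0 1) eqn_add2l => /eqP h0 v.
case: (boolP (connect r x0 v)) => // nc; exfalso.
have : fingraph.root (connect r) v \in predI (roots (connect r)) [predC connect r x0].
  rewrite !inE (roots_root csym) /=; apply/negP => c0; move/negP: nc; apply.
  apply: (connect_trans c0); rewrite -connect_connect.
  by rewrite csym connect_root.
by move: h0; rewrite /n_comp_mem => /card0_eq ->.
Qed.

Lemma conn_ncomp1 x0 : (forall v, connect r x0 v) -> n_comp (connect r) [set: T] = 1.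
Proof.
move=> h; rewrite (ncomp_split x0); apply/eqP; rewrite -{2}(addn0 1) eqn_add2l.
apply/eqP; apply: eq_card0 => z; by rewrite !inE h andbF.
Qed.

Lemma closed_conn (P : pred T) :
  (forall u v, r u v -> P u -> P v) -> forall x y, connect r x y -> P x -> P y.
Proof.
move=> cl x y /connectP[p pth ->]; elim: p x pth => //= a p IH x /andP[rxa pth] Px.
by apply: IH => //; apply: cl Px.
Qed.

End Gen.
Set Warnings "-all".
Set Implicit Arguments. Unset Strict Implicit. Unset Printing Implicit Defensive.

Section Wheel.
Variable n : nat.
Hypothesis n3 : (3 <= n)%N.
Local Open Scope nat_scope.

Local Notation V := 'I_n.+1.

Definition nxt (v : V) : V := inord (if (v : nat) == n then 1 else ((v : nat)).+1).
Definition prv (v : V) : V := inord (if (v : nat) <= 1 then n else ((v : nat)).-1).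

Lemma nxt_val (v : V) : (nxt v : nat) = if (v : nat) == n then 1 else ((v : nat)).+1.
Proof.
rewrite /nxt inordK //; have := ltn_ord v; case: ifP => /eqP; lia.
Qed.

Lemma prv_val (v : V) : (prv v : nat) = if (v : nat) <= 1 then n else ((v : nat)).-1.
Proof.
rewrite /prv inordK //; have := ltn_ord v; case: ifP; lia.
Qed.

Lemma nxt_spec (v : V) : ((v : nat) = n /\ (nxt v : nat) = 1) \/ ((v : nat) < n /\ (nxt v : nat) = (v : nat).+1).
Proof. rewrite nxt_val; have := ltn_ord v; case: ifP => /eqP; lia. Qed.

Lemma prv_spec (v : V) : ((v : nat) <= 1 /\ (prv v : nat) = n) \/ (1 < (v : nat) /\ (prv v : nat) = (v : nat).-1).
Proof. rewrite prv_val; have := ltn_ord v; case: ifP; lia. Qed.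

Global Opaque nxt prv.

Ltac ar v := have := ltn_ord v; have := nxt_spec v; have := prv_spec v;
  have := nxt_spec (prv v); have := prv_spec (nxt v); have := nxt_spec (nxt v); lia.

Lemma nxt_pos (v : V) : 0 < (nxt v : nat).
Proof. ar v. Qed.

Lemma prv_pos (v : V) : 0 < (prv v : nat).
Proof. ar v. Qed.

Lemma nxtK (v : V) : 0 < (v : nat) -> prv (nxt v) = v.
Proof. move=> vp; apply: val_inj => /=; ar v. Qed.

Lemma prvK (v : V) : 0 < (v : nat) -> nxt (prv v) = v.
Proof. move=> vp; apply: val_inj => /=; ar v. Qed.

Lemma nxt_neq (v : V) : nxt v != v.
Proof. apply/eqP => /(congr1 val) /=; ar v. Qed.

Lemma nxt2_neq (v : V) : 0 < (v : nat) -> nxt (nxt v) != v.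
Proof. move=> vp; apply/eqP => /(congr1 val) /=; ar v. Qed.

Lemma cyc_closed (P : pred V) :
  (exists2 v : V, 0 < (v : nat) & P v) -> (forall u : V, 0 < (u:nat) -> P u -> P (nxt u)) ->
  forall w : V, 0 < (w:nat) -> P w.
Proof.
move=> [v vp Pv] cl.
have step : forall k, 0 < k -> k < n -> P (inord k) -> P (inord k.+1).
  move=> k k0 kn Pk; have := cl _ _ Pk.
  have e : nxt (inord k) = inord k.+1.
    apply: ord_inj; have := nxt_spec (inord k); rewrite (@inordK n k) ?(@inordK n k.+1); lia.
  rewrite e; apply; rewrite inordK; lia.
have up : forall a m, 0 < a -> a + m <= n -> P (inord a) -> P (inord (a + m)).
  move=> a; elim=> [|m IH] a0 am Pa; first by rewrite addn0.
  rewrite addnS; apply: step; try lia; apply: IH; lia.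
have Pn : P (inord n).
  have := up ((v : nat)) (n - (v : nat)) vp; rewrite inord_val; move/(_ _ Pv).
  have -> : (v : nat) + (n - (v : nat)) = n by have := ltn_ord v; lia.
  apply; have := ltn_ord v; lia.
have P1 : P (inord 1).
  have := cl _ _ Pn; rewrite ?inordK //.
  have -> : nxt (inord n) = inord 1.
    by apply: ord_inj; have := nxt_spec (inord n); rewrite (@inordK n n) ?(@inordK n 1); lia.
  apply; lia.
move=> w wp; have := up 1 ((w:nat) - 1) isT;
have -> : 1 + ((w:nat) - 1) = (w:nat) by lia.
rewrite inord_val; apply=> //; have := ltn_ord w; lia.
Qed.

Lemma cyc_closed_prv (P : pred V) :
  (exists2 v : V, 0 < (v : nat) & P v) -> (forall u : V, 0 < (u:nat) -> P u -> P (prv u)) ->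
  forall w : V, 0 < (w:nat) -> P w.
Proof.
move=> [v vp Pv] cl w wp; apply/negPn/negP => nPw.
have := @cyc_closed (fun u => ~~ P u) (ex_intro2 _ _ w wp nPw).
have /[swap] /[apply] : forall u : V, 0 < (u:nat) -> ~~ P u -> ~~ P (nxt u).
  move=> u up; apply: contra => Pn; have := cl _ (nxt_pos u) Pn; by rewrite nxtK.
by move/(_ v vp); rewrite Pv.
Qed.


Definition posS : {set V} := [set v : V | 0 < (v : nat)].
Definition spoke (i : V) : {set V} := [set ord0; i].
Definition rim (i : V) : {set V} := [set i; nxt i].
Definition spokes (X : {set V}) := spoke @: X.
Definition rims (X : {set V}) := rim @: X.

Lemma posP (v : V) : (v \in posS) = (0 < (v : nat)).
Proof. by rewrite inE. Qed.

Lemma pos_ne0 (v : V) : (v \in posS) = (v != ord0).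
Proof. by rewrite posP lt0n -val_eqE. Qed.

Lemma set2_eq (a b c d : V) :
  ([set a; b] == [set c; d]) = ((a == c) && (b == d)) || ((a == d) && (b == c)).
Proof.
apply/eqP/idP => [E | /orP[] /andP[/eqP-> /eqP->] //]; last by rewrite setUC.
have h1 : a \in [set c; d] by rewrite -E set21.
have h2 : b \in [set c; d] by rewrite -E set22.
have h3 : c \in [set a; b] by rewrite E set21.
have h4 : d \in [set a; b] by rewrite E set22.
move: h1 h2 h3 h4; rewrite !inE => /orP[]/eqP h1 /orP[]/eqP h2 /orP[]/eqP h3 /orP[]/eqP h4;
  subst; rewrite ?eqxx ?orbT //.
Qed.

Lemma spoke_inj : injective spoke.
Proof.
move=> i j /eqP; rewrite set2_eq eqxx /= => /orP[/eqP //| /andP[/eqP <- /eqP ->]] //.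
Qed.

Lemma rim_inj (i j : V) : 0 < (i : nat) -> 0 < (j : nat) -> rim i = rim j -> i = j.
Proof.
move=> ip jp /eqP; rewrite set2_eq => /orP[/andP[/eqP //] | /andP[/eqP e1 /eqP e2]].
by have := nxt2_neq jp; rewrite -e1 e2 eqxx.
Qed.

Lemma spoke_rim (i j : V) : 0 < (i : nat) -> spoke j != rim i.
Proof.
move=> ip; rewrite set2_eq; apply/negP => /orP[] /andP[/eqP e _].
  by move: ip; rewrite -e.
by move: (nxt_pos i); rewrite -e.
Qed.

Lemma cyc_adjE (u v : V) :
  cyc_adj n u v = ((0 < (u : nat)) && (v == nxt u)) || ((0 < (v : nat)) && (u == nxt v)).
Proof.
rewrite /cyc_adj -!val_eqE /=.
have := ltn_ord u; have := ltn_ord v; have := nxt_spec u; have := nxt_spec v.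
move: (u : nat) (v : nat) (nxt u : nat) (nxt v : nat) => a b c d.
case: (a =P 0); case: (b =P 0); case: (a =P 1); case: (b =P 1); case: (a =P n); case: (b =P n);
case: (b =P c); case: (a =P d); case: (b =P a.+1); case: (a =P b.+1); intros; subst; simpl; lia.
Qed.

Lemma wheel_edges : edges (@wheel_adj n) = spokes posS :|: rims posS.
Proof.
apply/setP => e; rewrite /edges !inE; apply/existsP/idP.
  move=> [u /existsP[v /and3P[uv]]]; rewrite /wheel_adj cyc_adjE => adj /eqP ->.
  case/or3P: adj => [/orP[] /andP[up /eqP ->] | /andP[u0 v1] | /andP[v0 u1]].
  - by apply/orP; right; apply/imsetP; exists u; rewrite ?posP.
  - by apply/orP; right; apply/imsetP; exists v; rewrite ?posP // /rim setUC.
  - have -> : u = ord0 by apply: val_inj; apply/eqP.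
    by apply/orP; left; apply/imsetP; exists v; rewrite ?posP.
  - have -> : v = ord0 by apply: val_inj; apply/eqP.
    by apply/orP; left; apply/imsetP; exists u; rewrite ?posP // /spoke setUC.
case/orP => /imsetP[i]; rewrite posP => ip ->.
  exists ord0; apply/existsP; exists i; apply/and3P; split => //.
    by rewrite -val_eqE /= neq_ltn ip.
  by apply/or3P; constructor 2.
exists i; apply/existsP; exists (nxt i); rewrite eq_sym nxt_neq /wheel_adj cyc_adjE ip eqxx.
by rewrite eqxx.
Qed.

Lemma cycle_edges : edges (@cycle_adj n) = rims posS.
Proof.
apply/setP => e; rewrite /edges !inE; apply/existsP/idP.
  move=> [u /existsP[v /and3P[uv]]]; rewrite /cycle_adj cyc_adjE => adj /eqP ->.
  case/orP: adj => /andP[up /eqP ->].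
  - by apply/imsetP; exists u; rewrite ?posP.
  - by apply/imsetP; exists v; rewrite ?posP // /rim setUC.
case/imsetP => i; rewrite posP => ip ->.
exists i; apply/existsP; exists (nxt i); rewrite eq_sym nxt_neq /cycle_adj cyc_adjE ip eqxx.
by rewrite eqxx.
Qed.


Implicit Types (S R : {set V}) (u v w i : V) (A : {set {set V}}).

Definition adjA (A : {set {set V}}) : rel V := fun u v => [set u; v] \in A.
Definition Aof (S R : {set V}) := spokes S :|: rims R.

Lemma adjA_sym A : symmetric (adjA A).
Proof. by move=> u v; rewrite /adjA setUC. Qed.

Lemma adj_spoke S R i : i \in S -> adjA (Aof S R) ord0 i.
Proof. by move=> iS; rewrite /adjA inE (imset_f spoke iS). Qed.

Lemma adj_rim S R i : i \in R -> adjA (Aof S R) i (nxt i).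
Proof. by move=> iR; rewrite /adjA inE (imset_f rim iR) orbT. Qed.

Lemma adj_inv S R u v : adjA (Aof S R) u v ->
  [|| (u == ord0) && (v \in S), (v == ord0) && (u \in S),
      (u \in R) && (v == nxt u) | (v \in R) && (u == nxt v)].
Proof.
rewrite /adjA inE => /orP[/imsetP[i iS /eqP] | /imsetP[i iR /eqP]];
  rewrite set2_eq => /orP[]/andP[/eqP-> /eqP->].
- by rewrite ?eqxx ?iS ?iR ?orbT.
- by rewrite ?eqxx ?iS ?iR ?orbT.
- by rewrite ?eqxx ?iS ?iR ?orbT.
- by rewrite ?eqxx ?iS ?iR ?orbT.
Qed.

(* forward / backward reachability of a spoke along rim edges *)
Definition erel (g f : V -> V) (R : {set V}) : rel V := fun a b => (g a \in R) && (b == f a).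
Definition reach g f (S R : {set V}) (w : V) := [exists u in S, connect (erel g f R) w u].

Lemma reach_rec g f S R w :
  reach g f S R w = (w \in S) || ((g w \in R) && reach g f S R (f w)).
Proof.
apply/existsP/orP.
  move=> [u /andP[uS /connectP[p pth equ]]]; subst u.
  case: p pth uS => [|x p] /=; first by left.
  case/andP => /andP[gR /eqP ->] pth uS; right; rewrite gR /=.
  by apply/existsP; exists (last (f w) p); rewrite uS /=; apply/connectP; exists p.
case=> [wS | /andP[gR /existsP[u /andP[uS c]]]]; first by exists w; rewrite wS connect0.
exists u; rewrite uS /=; apply: connect_trans c; apply: connect1.
by rewrite /erel gR eqxx.
Qed.

Definition fw S R v := ((v \in R) && reach id nxt S R (nxt v)) || (posS \subset R).
Definition bw S R v := (prv v \in R) && reach prv prv S R (prv v).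

Lemma fw_rec S R v : 0 < (v : nat) ->
  fw S R v = (v \in R) && ((nxt v \in S) || fw S R (nxt v)).
Proof.
move=> vp; rewrite /fw; case: (boolP (posS \subset R)) => [sub|_].
  by rewrite !orbT (subsetP sub) // posP.
by rewrite !orbF reach_rec.
Qed.

Lemma bw_rec S R v : bw S R v = (prv v \in R) && ((prv v \in S) || bw S R (prv v)).
Proof. by rewrite /bw reach_rec. Qed.

Lemma fw_full S R v : posS \subset R -> fw S R v.
Proof. by move=> h; rewrite /fw h orbT. Qed.

Lemma adj_connect_sym A : connect_sym (adjA A).
Proof. exact: sym_connect_sym (@adjA_sym A). Qed.

Lemma conn_states S R : S \subset posS -> R \subset posS ->
  (forall v, connect (adjA (Aof S R)) ord0 v) ->
  forall v, 0 < (v : nat) -> [|| v \in S, fw S R v | bw S R v].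
Proof.
move=> sS sR c v vp.
pose Dead u := (0 < (u : nat)) && ~~ [|| u \in S, fw S R u | bw S R u].
have cl : forall a b, adjA (Aof S R) a b -> Dead a -> Dead b.
  move=> a b /adj_inv /or4P[] /andP[h1 h2]; rewrite /Dead.
  - by rewrite (eqP h1).
  - by rewrite h2 andbF.
  - move/eqP: h2 => ->; case/andP => ap; rewrite nxt_pos /= fw_rec //.
    rewrite (bw_rec _ _ (nxt a)) nxtK // h1 /=.
    by case: (a \in S); case: (nxt a \in S); case: (fw S R (nxt a)); case: (bw S R a).
  - have bp : 0 < (b : nat) by rewrite -posP (subsetP sR).
    move/eqP: h2 => ->; rewrite (fw_rec _ _ bp) bp (bw_rec _ _ (nxt b)) nxtK // h1 /=.
    rewrite nxt_pos /=; by case: (b \in S); case: (nxt b \in S); case: (fw S R (nxt b)); case: (bw S R b).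
case: (boolP [|| v \in S, fw S R v | bw S R v]) => // nd; exfalso.
have cv : connect (adjA (Aof S R)) v ord0 by rewrite adj_connect_sym.
by have := @closed_conn _ _ Dead cl _ _ cv; rewrite /Dead vp nd => /(_ isT).
Qed.

Lemma conn_S S R : R \subset posS ->
  (forall v, connect (adjA (Aof S R)) ord0 v) -> S != set0.
Proof.
move=> sR c; apply/negP => /eqP S0.
have cl : forall a b, adjA (Aof S R) a b -> a == ord0 -> b == ord0.
  move=> a b /adj_inv /or4P[] /andP[h1 h2] /eqP a0.
  - by rewrite S0 inE in h2.
  - by [].
  - by have := subsetP sR _ h1; rewrite a0 posP.
  - by have := nxt_pos b; rewrite -(eqP h2) a0.
have := @closed_conn _ _ (fun u => u == ord0) cl _ _ (c (inord 1)) (eqxx _).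
by rewrite -val_eqE /= inordK //; lia.
Qed.

Definition good S R := [/\ S \subset posS, R \subset posS &
  (forall v, connect (adjA (Aof S R)) ord0 v) \/ (S = set0 /\ R = posS)].

Definition PsiV S R := [set v in posS | fw S R v || (v \in S)].
Definition PsiI S R := [set v in posS | fw S R v].
Definition PsiF S R := [set v in posS | fw S R v && (v \in S)].
Definition PhiS (W I F : {set V}) := F :|: (W :\: I).
Definition PhiR (W I F : {set V}) := I :|: [set v in posS | nxt v \notin W].

Definition Valid (W I F : {set V}) := [&& W \subset posS, W != set0, I \subset posS,
  [forall i in I, (i \in W) && (nxt i \in W)] & F \subset I].

Lemma G1 S R : good S R -> forall v, 0 < (v : nat) -> v \notin S -> ~~ fw S R v -> prv v \in R.
Proof.
case=> sS sR [c | [_ ->]] v vp vS fv; last by rewrite posP prv_pos.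
by have := conn_states sS sR c vp; rewrite (negbTE vS) (negbTE fv) /= => /andP[].
Qed.

Lemma in_pos (X : {set V}) v : X \subset posS -> v \in X -> 0 < (v : nat).
Proof. by move=> sX vX; rewrite -posP (subsetP sX). Qed.

Lemma one_pos : 0 < ((inord 1 : V) : nat).
Proof. by rewrite inordK //; lia. Qed.

Lemma G2 S R : good S R -> PsiV S R != set0.
Proof.
case=> sS sR [c | [-> ->]].
  have /set0Pn[s sin] := conn_S sR c.
  by apply/set0Pn; exists s; rewrite inE sin orbT posP (in_pos sS sin).
apply/set0Pn; exists (inord 1); rewrite inE posP one_pos fw_full //.
Qed.

Lemma PhiPsiS S R : good S R -> PhiS (PsiV S R) (PsiI S R) (PsiF S R) = S.
Proof.
case=> sS sR _; apply/setP => v; rewrite !inE.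
case: (boolP (0 < (v : nat))) => vp /=; first by case: (fw S R v); case: (v \in S).
by apply/esym/negP => vS; move: vp; rewrite -posP (subsetP sS).
Qed.

Lemma PhiPsiR S R : good S R -> PhiR (PsiV S R) (PsiI S R) (PsiF S R) = R.
Proof.
move=> g; have [sS sR _] := g; apply/setP => v; rewrite !inE.
case: (boolP (0 < (v : nat))) => vp /=; last first.
  by apply/esym/negP => vR; move: vp; rewrite -posP (subsetP sR).
rewrite nxt_pos /= fw_rec //.
have := G1 g (nxt_pos v); rewrite nxtK // => h.
case: (boolP (nxt v \in S)) h => a; case: (boolP (fw S R (nxt v))) => b;
  case: (boolP (v \in R)) => c h //=. all: try by rewrite h.
Qed.

Lemma PsiValid S R : good S R -> Valid (PsiV S R) (PsiI S R) (PsiF S R).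
Proof.
move=> g; apply/and5P; split.
- by apply/subsetP => v; rewrite inE => /andP[].
- exact: G2.
- by apply/subsetP => v; rewrite inE => /andP[].
- apply/forallP => i; apply/implyP; rewrite !inE => /andP[ip fi].
  rewrite ip fi /= nxt_pos /=.
  by move: fi; rewrite fw_rec // => /andP[_]; rewrite orbC.
- by apply/subsetP => v; rewrite !inE => /andP[-> /andP[-> _]].
Qed.

Lemma validP W I F : Valid W I F ->
  [/\ W \subset posS, W != set0, I \subset posS,
      (forall i, i \in I -> (i \in W) /\ (nxt i \in W)) & F \subset I].
Proof.
case/and5P => a b c /forallP d e; split=> // i iI.
by have /implyP/(_ iI)/andP[] := d i.
Qed.

Lemma IW W I F : Valid W I F -> I \subset W.
Proof. by case/validP => _ _ _ h _; apply/subsetP => i /h[]. Qed.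

Lemma SW W I F : Valid W I F -> PhiS W I F \subset W.
Proof.
move=> val; have [_ _ _ _ sF] := validP val; have sI := IW val.
apply/subsetP => v; rewrite !inE => /orP[vF|/andP[_ //]].
by rewrite (subsetP sI) // (subsetP sF).
Qed.

Lemma Irec W I F : Valid W I F -> forall v, 0 < (v : nat) ->
  (v \in I) = (v \in PhiR W I F) && ((nxt v \in PhiS W I F) || (nxt v \in I)).
Proof.
move=> val v vp; have [sW _ sI h sF] := validP val; apply/idP/idP.
  move=> vI; rewrite inE vI /=; case: (boolP (nxt v \in I)) => nI; rewrite ?orbT //.
  by rewrite orbF !inE nI (h _ vI).2 orbT.
case/andP; rewrite inE => /orP[//|]; rewrite inE => /andP[_ nW] X; exfalso.
move/negP: nW; apply; case/orP: X => X; first exact: (subsetP (SW val)).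
exact: (subsetP (IW val)).
Qed.

Lemma fwI W I F : Valid W I F -> forall v, 0 < (v : nat) ->
  fw (PhiS W I F) (PhiR W I F) v = (v \in I).
Proof.
move=> val v vp; have [sW W0 sI h sF] := validP val.
set S := PhiS W I F; set R := PhiR W I F.
apply/eqP; case: (boolP (fw S R v == (v \in I))) => // hne; exfalso.
pose D u := (0 < (u : nat)) && (fw S R u != (u \in I)).
have key : forall u, D u -> (u \in R) && (nxt u \notin S) && D (nxt u).
  move=> u /andP[up]; rewrite fw_rec // (Irec val up) /D nxt_pos /=.
  by case: (u \in R); case: (nxt u \in S); case: (fw S R (nxt u)); case: (nxt u \in I).
have allD : forall u, 0 < (u : nat) -> D u.
  apply: cyc_closed; first by exists v => //; rewrite /D vp hne.
  by move=> u _ /key /andP[].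
have S0 : forall s, s \notin S.
  move=> s; apply/negP => sS.
  have sp : 0 < (s : nat) by apply: (in_pos sW); apply: (subsetP (SW val)).
  have /key/andP[/andP[_]] := allD _ (prv_pos s); rewrite prvK // sS //.
have fall : forall u, fw S R u.
  move=> u; apply: fw_full; apply/subsetP => w; rewrite posP => wp.
  by have /key/andP[/andP[]] := allD _ wp.
have /set0Pn[w wW] := W0.
have wp := in_pos sW wW.
have := allD _ wp; rewrite /D fall wp /= => wI.
by have := S0 w; rewrite !inE wW /= orbC; move: wI; case: (w \in I).
Qed.

Lemma PsiPhi W I F : Valid W I F ->
  [/\ PsiV (PhiS W I F) (PhiR W I F) = W, PsiI (PhiS W I F) (PhiR W I F) = I
    & PsiF (PhiS W I F) (PhiR W I F) = F].
Proof.
move=> val; have [sW W0 sI h sF] := validP val; have sIW := IW val.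
split; apply/setP => v; rewrite !inE.
- case: (boolP (0 < (v : nat))) => vp /=; last first.
    by apply/esym/negP => vW; move: vp; rewrite -posP (subsetP sW).
  rewrite fwI //; case: (boolP (v \in I)) => vI /=; first by rewrite (subsetP sIW).
  by apply/idP/idP => [/orP[/(subsetP sF)|] //|->]; rewrite ?orbT // => vI2; rewrite vI2 in vI.
- case: (boolP (0 < (v : nat))) => vp /=; last first.
    by apply/esym/negP => vW; move: vp; rewrite -posP (subsetP sI).
  by rewrite fwI.
- case: (boolP (0 < (v : nat))) => vp /=; last first.
    by apply/esym/negP => vW; move: vp; rewrite -posP (subsetP sI) // (subsetP sF).
  rewrite fwI //; case: (boolP (v \in I)) => vI /=; rewrite ?andbF ?orbF //.
  by apply/esym/negP => vF; move/negP: vI; apply; apply: (subsetP sF).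
Qed.

Lemma cardsU_dis (A B : {set V}) : (forall x, x \in A -> x \notin B) ->
  #|A :|: B| = #|A| + #|B|.
Proof.
move=> h; rewrite cardsU.
have -> : A :&: B = set0.
  by apply/setP => x; rewrite !inE; case xa: (x \in A) => //=; rewrite (negbTE (h x xa)).
by rewrite cards0 subn0.
Qed.

Lemma card_posS : #|posS| = n.
Proof.
have -> : posS = [set~ ord0] by apply/setP => v; rewrite in_setC1 -pos_ne0.
by rewrite cardsC1 card_ord.
Qed.

Lemma card_Aof S R : R \subset posS -> #|Aof S R| = #|S| + #|R|.
Proof.
move=> sR; rewrite /Aof cardsU.
have -> : spokes S :&: rims R = set0.
  apply/setP => e; rewrite !inE; apply/negP => /andP[/imsetP[i _ ->] /imsetP[j jR]].
  by apply/eqP; apply: spoke_rim; apply: (in_pos sR).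
rewrite cards0 subn0 card_imset; last exact: spoke_inj.
rewrite card_in_imset // => i j iR jR; apply: rim_inj; exact: (in_pos sR).
Qed.

Lemma card_Phi W I F : Valid W I F -> #|PhiS W I F| + #|PhiR W I F| = #|F| + n.
Proof.
move=> val; have [sW W0 sI h sF] := validP val; have sIW := IW val.
rewrite /PhiS /PhiR cardsU_dis; last first.
  by move=> x xF; rewrite !inE (subsetP sF) // andbF.
rewrite cardsU_dis; last first.
  by move=> x xI; rewrite !inE (h _ xI).2 andbF.
set P2 := [set v in posS | nxt v \notin W].
have cP2 : #|P2| = #|posS :\: W|.
  have -> : posS :\: W = nxt @: P2.
    apply/setP => w; rewrite !inE; apply/andP/imsetP.
      case=> wW wp; exists (prv w); rewrite ?prvK // !inE prv_pos /= prvK //.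
    case=> u; rewrite !inE => /andP[up nW] ->; by rewrite nxt_pos.
  rewrite card_in_imset // => a b; rewrite !inE => /andP[ap _] /andP[bp _] e.
  by rewrite -(nxtK ap) -(nxtK bp) e.
rewrite cP2 cardsD (setIidPr sW) card_posS cardsD (setIidPr sIW).
have := subset_leq_card sIW; have := subset_leq_card sW; rewrite card_posS; lia.
Qed.

Lemma PhiGood W I F : Valid W I F -> good (PhiS W I F) (PhiR W I F).
Proof.
move=> val; have [sW W0 sI h sF] := validP val; have sIW := IW val.
set S := PhiS W I F; set R := PhiR W I F.
have sS : S \subset posS by apply: subset_trans (SW val) sW.
have sR : R \subset posS.
  by apply/subsetP => v; rewrite !inE => /orP[/(subsetP sI)|/andP[]]; rewrite ?posP.
split=> //.
case: (boolP ((S == set0) && (R == posS))) => [/andP[/eqP -> /eqP ->]|ex]; [by right|left].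
set r := adjA (Aof S R).
have cS : forall u, u \in S -> connect r ord0 u by move=> u uS; apply: connect1; apply: adj_spoke.
have cR : forall u, u \in R -> connect r ord0 u = connect r ord0 (nxt u).
  move=> u uR; apply/idP/idP => c; apply: (connect_trans c); apply: connect1.
    exact: adj_rim.
  by rewrite /r adjA_sym; apply: adj_rim.
have notWS : forall u, u \in W -> u \notin I -> u \in S.
  by move=> u uW uI; rewrite !inE uW uI orbT.
move=> v; case: (boolP (connect r ord0 v)) => // nc; exfalso.
have vp : 0 < (v : nat).
  rewrite lt0n; apply/negP => /eqP v0; have vo : v = ord0 by apply: val_inj.
  by rewrite vo connect0 in nc.
case: (boolP [exists u : V, [&& 0 < (u : nat), ~~ connect r ord0 u & u \in W]]).
  case/existsP => u /and3P[up nu uW].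
  pose Q u := ~~ connect r ord0 u && (u \in W).
  have QI : forall u, Q u -> u \in I.
    move=> a /andP[na aW]; case: (boolP (a \in I)) => // aI.
    by have := cS _ (notWS _ aW aI); rewrite (negbTE na).
  have allQ : forall a : V, 0 < (a : nat) -> Q a.
    apply: cyc_closed; first by exists u => //; rewrite /Q nu uW.
    move=> a ap Qa; have aI := QI _ Qa; move/andP: Qa => [na aW].
    have aR : a \in R by rewrite !inE aI.
    by rewrite /Q -(cR _ aR) na (h _ aI).2.
  move/negP: ex; apply; apply/andP; split.
    apply/eqP/setP => s; rewrite in_set0; apply/negP => sS'.
    have := allQ _ (in_pos sS sS'); by rewrite /Q cS.
  rewrite eqEsubset sR /=; apply/subsetP => a; rewrite posP => ap.
  by rewrite !inE QI // allQ.
rewrite negb_exists => /forallP noW.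
have allB : forall a : V, 0 < (a : nat) -> ~~ connect r ord0 a.
  apply: cyc_closed_prv; first by exists v.
  move=> a ap na; have aW : a \notin W.
    by have := noW a; rewrite ap na /= => /negP/negP.
  have pR : prv a \in R by rewrite !inE prv_pos prvK // aW orbT.
  by rewrite (cR _ pR) prvK.
have /set0Pn[w wW] := W0; have wp := in_pos sW wW.
by have := noW w; rewrite wp wW allB.
Qed.

Definition sidx A := [set i in posS | spoke i \in A].
Definition ridx A := [set i in posS | rim i \in A].
Definition goodE A := (ncomp A == 1) || (A == rims posS).

Lemma Aof_sub S R : S \subset posS -> R \subset posS -> Aof S R \subset Aof posS posS.
Proof. by move=> sS sR; apply: setUSS; apply: imsetS. Qed.

Lemma decomp A : A \subset Aof posS posS -> A = Aof (sidx A) (ridx A).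
Proof.
move=> sA; apply/setP => e; apply/idP/idP.
  move=> eA; have := subsetP sA _ eA; rewrite inE => /orP[] /imsetP[i ip ei]; subst e.
    by rewrite inE imset_f // inE ip eA.
  by rewrite inE (imset_f rim) ?orbT // inE ip eA.
by rewrite inE => /orP[] /imsetP[i]; rewrite inE => /andP[_ h] ->.
Qed.

Lemma sidx_Aof S R : S \subset posS -> R \subset posS -> sidx (Aof S R) = S.
Proof.
move=> sS sR; apply/setP => v; rewrite !inE mem_imset; last exact: spoke_inj.
case: (boolP (v \in S)) => vS; first by rewrite (in_pos sS vS).
apply/negP => /andP[_ /imsetP[j jR /eqP]].
by apply/negP; apply: spoke_rim; apply: (in_pos sR).
Qed.

Lemma ridx_Aof S R : S \subset posS -> R \subset posS -> ridx (Aof S R) = R.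
Proof.
move=> sS sR; apply/setP => v; rewrite !inE.
case: (boolP (0 < (v : nat))) => vp /=; last first.
  by apply/esym/negP => vR; move: vp; rewrite -posP (subsetP sR).
have -> : (rim v \in spokes S) = false.
  apply/negP => /imsetP[j _ /eqP]; rewrite eq_sym; apply/negP; exact: spoke_rim.
apply/imsetP/idP => [[j jR /(rim_inj vp (in_pos sR jR)) ->] // | vR].
by exists v.
Qed.

Lemma ncompE A : ncomp A = n_comp (connect (adjA A)) [set: V].
Proof. by []. Qed.

Lemma conn_ncomp A : (ncomp A == 1) = [forall v, connect (adjA A) ord0 v].
Proof.
rewrite ncompE; apply/eqP/forallP => h.
  by move=> v; exact: (@ncomp1_conn _ _ (@adjA_sym A) ord0 h v).
exact: (@conn_ncomp1 _ _ (@adjA_sym A) ord0 h).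
Qed.

Lemma rims_Aof : rims posS = Aof set0 posS.
Proof. by rewrite /Aof /spokes imset0 set0U. Qed.

Lemma good_of A : A \subset Aof posS posS -> goodE A -> good (sidx A) (ridx A).
Proof.
move=> sA; have s1 : sidx A \subset posS by apply/subsetP => v; rewrite inE => /andP[].
have s2 : ridx A \subset posS by apply/subsetP => v; rewrite inE => /andP[].
case/orP => [|/eqP eA].
  rewrite conn_ncomp => /forallP c; split=> //; left; by rewrite -decomp.
split=> //; right; rewrite eA rims_Aof sidx_Aof ?ridx_Aof ?sub0set //.
Qed.

Lemma goodE_of S R : good S R -> goodE (Aof S R).
Proof.
case=> sS sR [c | [-> ->]]; last by rewrite /goodE -rims_Aof eqxx orbT.
by rewrite /goodE conn_ncomp; apply/orP; left; apply/forallP.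
Qed.

Lemma rims_not_conn : ncomp (rims posS) != 1.
Proof.
rewrite conn_ncomp rims_Aof; apply/negP => /forallP c.
by have := conn_S (subxx _) c; rewrite eqxx.
Qed.

Lemma card_rims : #|rims posS| = n.
Proof.
rewrite card_in_imset ?card_posS // => i j ip jp; apply: rim_inj; by rewrite -posP.
Qed.

Lemma card_posS_ord : #|'I_n.+1| = n.+1.
Proof. exact: card_ord. Qed.

Local Open Scope ring_scope.
Import GRing.Theory.

Local Notation z := ('X - 1 : {poly int}).

Lemma L_tutte : tutte (@wheel_adj n) (1 : {poly int}) 'X =
  \sum_(A in powerset (Aof posS posS)) (if ncomp A == 1%N then z ^+ (#|A| - n)%N else 0).
Proof.
rewrite /tutte wheel_edges -/(Aof posS posS); apply: eq_bigr => A _.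
have rE : rk (Aof posS posS) = n.
  rewrite /rk card_ord; suff -> : ncomp (Aof posS posS) = 1%N by rewrite subn1.
  apply/eqP; rewrite conn_ncomp; apply/forallP => v.
  case: (boolP (0 < (v : nat))%N) => vp; first by apply: connect1; apply: adj_spoke; rewrite posP.
  have -> : v = ord0 by apply: val_inj; rewrite /= ; move: vp; rewrite lt0n negbK => /eqP.
  exact: connect0.
have c1 : (0 < ncomp A)%N.
  by case: (@ncomp_gt0 _ _ (@adjA_sym A)) => //; rewrite card_ord.
rewrite rE /rk card_ord subrr expr0n.
case: (boolP (ncomp A == 1%N)) => [/eqP ->|h].
  by rewrite subn1 /= subnn eqxx mul1r.
have -> : (n - (n.+1 - ncomp A) == 0)%N = false.
  by apply/negbTE; move: h c1; have := ncomp A; lia.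
by rewrite mul0r.
Qed.

Lemma L_good : 1 + tutte (@wheel_adj n) (1 : {poly int}) 'X =
  \sum_(A in powerset (Aof posS posS) | goodE A) z ^+ (#|A| - n)%N.
Proof.
have r0 : rims posS \in powerset (Aof posS posS).
  by rewrite powersetE rims_Aof; apply: Aof_sub; rewrite ?sub0set.
rewrite L_tutte [RHS](bigD1 (rims posS)) /=; last by rewrite r0 /goodE eqxx orbT.
rewrite card_rims subnn expr0; congr (_ + _).
rewrite -big_mkcondr /=; apply: eq_bigl => A; rewrite /goodE.
case: (boolP (A == rims posS)) => [/eqP ->|h]; last by rewrite !orbF !andbT.
by rewrite (negbTE rims_not_conn) !andbF.
Qed.

Definition hPhi (x : {set V} * {set V} * {set V}) :=
  Aof (PhiS x.1.1 x.1.2 x.2) (PhiR x.1.1 x.1.2 x.2).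
Definition hPsi (A : {set {set V}}) : {set V} * {set V} * {set V} :=
  ((PsiV (sidx A) (ridx A), PsiI (sidx A) (ridx A)), PsiF (sidx A) (ridx A)).

Lemma PhiS_sub W I F : Valid W I F -> PhiS W I F \subset posS.
Proof. move=> val; have [sW _ _ _ _] := validP val; exact: subset_trans (SW val) sW. Qed.

Lemma PhiR_sub W I F : Valid W I F -> PhiR W I F \subset posS.
Proof.
move=> val; have [_ _ sI _ _] := validP val.
by apply/subsetP => v; rewrite !inE => /orP[/(subsetP sI)|/andP[]]; rewrite ?posP.
Qed.

Lemma cond_eq W I F :
  (hPhi (W, I, F) \in powerset (Aof posS posS)) && goodE (hPhi (W, I, F)) &&
  (hPsi (hPhi (W, I, F)) == (W, I, F)) = Valid W I F.
Proof.
apply/idP/idP.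
  case/andP => /andP[hE hg] /eqP hx.
  have : Valid (hPsi (hPhi (W, I, F))).1.1 (hPsi (hPhi (W, I, F))).1.2 (hPsi (hPhi (W, I, F))).2.
    by apply: PsiValid; apply: good_of => //; rewrite -powersetE.
  by rewrite hx.
move=> val; have g := PhiGood val.
rewrite /hPhi /= powersetE Aof_sub ?PhiS_sub ?PhiR_sub //= goodE_of //=.
rewrite /hPsi sidx_Aof ?PhiS_sub ?PhiR_sub // ridx_Aof ?PhiS_sub ?PhiR_sub //.
by have [-> -> ->] := PsiPhi val.
Qed.

Lemma L_reindex :
  \sum_(A in powerset (Aof posS posS) | goodE A) z ^+ (#|A| - n)%N =
  \sum_(x | Valid x.1.1 x.1.2 x.2) z ^+ #|x.2|.
Proof.
rewrite (reindex_onto hPhi hPsi) /=; last first.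
  move=> A /andP[]; rewrite powersetE => sA gA; have g := good_of sA gA.
  by rewrite /hPhi /= PhiPsiS // PhiPsiR // -decomp.
apply: eq_big => [[[W I] F]|[[W I] F]]; first exact: cond_eq.
rewrite cond_eq => val; congr (_ ^+ _).
by rewrite /hPhi /= card_Aof ?PhiR_sub // card_Phi // addnK.
Qed.

Lemma sum_subset_pow (a : {poly int}) (I : {set V}) :
  \sum_(F : {set V} | F \subset I) a ^+ #|F| = (a + 1) ^+ #|I|.
Proof.
rewrite -prodr_const [RHS]big_mkcond /=.
transitivity (\prod_(i : V) ((if i \in I then a else 0) + 1)); last first.
  by apply: eq_bigr => i _; case: (i \in I); rewrite ?add0r.
rewrite bigA_distr big_mkcond /=; apply: eq_bigr => J _.
rewrite -big_mkcond /=.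
case: (boolP (J \subset I)) => sJ.
  by rewrite -prodr_const; apply: eq_bigr => i iJ; rewrite (subsetP sJ).
have [j jJ jI] : exists2 j, j \in J & j \notin I.
  by case/subsetPn: sJ => j jJ jI; exists j.
by rewrite (bigD1 j) //= (negbTE jI) mul0r.
Qed.

Definition VP (W I : {set V}) := [&& W \subset posS, W != set0, I \subset posS &
  [forall i in I, (i \in W) && (nxt i \in W)]].

Lemma Valid_VP W I F : Valid W I F = VP W I && (F \subset I).
Proof. by rewrite /Valid /VP !andbA. Qed.

Lemma L_pair : \sum_(x | Valid x.1.1 x.1.2 x.2) z ^+ #|x.2| =
  \sum_(q | VP q.1 q.2) 'X ^+ #|q.2|.
Proof.
under eq_bigl => x do rewrite Valid_VP.
rewrite -(pair_big_dep (fun q => VP q.1 q.2) (fun q (F : {set V}) => F \subset q.2) (fun q (F : {set V}) => z ^+ #|F|)) /=.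
by apply: eq_bigr => q _; rewrite sum_subset_pow subrK.
Qed.

Definition ridx' (Es : {set {set V}}) := [set i in posS | rim i \in Es].
Definition Pc (p : {set V} * {set {set V}}) := [&& p.1 != set0, ord0 \notin p.1,
  p.2 \subset edges (@cycle_adj n) & [forall e in p.2, e \subset p.1]].

Lemma rims_ridx' (Es : {set {set V}}) : Es \subset rims posS -> rims (ridx' Es) = Es.
Proof.
move=> sE; apply/setP => e; apply/imsetP/idP.
  by case=> i; rewrite inE => /andP[_ h] ->.
move=> eE; have /imsetP[i ip ei] := subsetP sE _ eE.
by exists i => //; rewrite inE ip -ei eE.
Qed.

Lemma ridx'_rims (I : {set V}) : I \subset posS -> ridx' (rims I) = I.
Proof.
move=> sI; apply/setP => v; rewrite !inE.
case: (boolP (0 < (v : nat))%N) => vp /=; last first.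
  by apply/esym/negP => vI; move: vp; rewrite -posP (subsetP sI).
apply/imsetP/idP => [[j jI /(rim_inj vp (in_pos sI jI)) ->] // | vI].
by exists v.
Qed.

Lemma ridx'_sub (Es : {set {set V}}) : ridx' Es \subset posS.
Proof. by apply/subsetP => v; rewrite inE => /andP[]. Qed.

Lemma W0pos (W : {set V}) : (ord0 \notin W) = (W \subset posS).
Proof.
apply/idP/idP.
  move=> h; apply/subsetP => w wW; rewrite pos_ne0; apply/eqP => w0.
  by move: h; rewrite -w0 wW.
by move=> sW; apply/negP => /(subsetP sW); rewrite posP.
Qed.

Lemma rims_subW (I W : {set V}) : ([forall e in rims I, e \subset W]) =
  [forall i in I, (i \in W) && (nxt i \in W)].
Proof.
apply/forallP/forallP => h x.
  apply/implyP => xI; have := h (rim x); rewrite imset_f //= subUset !sub1set.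
  by [].
apply/implyP => /imsetP[i iI ->]; have := h i; rewrite iI /= subUset !sub1set.
by [].
Qed.

Lemma L_rims : \sum_(q | VP q.1 q.2) 'X ^+ #|q.2| =
  \sum_(p | Pc p) ('X ^+ #|p.2| : {poly int}).
Proof.
rewrite [RHS](reindex_onto (fun q : {set V} * {set V} => (q.1, rims q.2))
                           (fun p => (p.1, ridx' p.2))) /=; last first.
  move=> [W Es] /and4P[_ _ sE _] /=; congr (_, _); apply: rims_ridx'.
  by rewrite -cycle_edges.
apply: eq_big => [[W I]|[W I]].
  rewrite /Pc /VP /=; apply/idP/idP.
    case/and4P => sW a sI d; rewrite ridx'_rims // eqxx andbT.
    apply/and4P; split => //; first by rewrite W0pos.
      by rewrite cycle_edges; apply: imsetS.
    by rewrite rims_subW.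
  case/andP => /and4P[a b c d] /eqP [] h.
  have sI : I \subset posS by rewrite -h ridx'_sub.
  apply/and4P; split => //; first by rewrite -W0pos.
  by rewrite -rims_subW.
rewrite /VP /= => /and4P[_ _ sI _]; rewrite card_in_imset // => i j iI jI.
by apply: rim_inj; apply: (in_pos sI).
Qed.

Lemma final k : (1 + tutte (@wheel_adj n) (1 : {poly int}) 'X)`_k = (a_kn k n)%:R.
Proof.
rewrite L_good L_reindex L_pair L_rims coef_sum.
under eq_bigr => p _ do rewrite coefXn.
rewrite /a_kn -sumr_const big_mkcond [RHS]big_mkcond /=.
apply: eq_bigr => p _; rewrite inE /Pc [k == _]eq_sym.
case: (p.1 != set0); case: (ord0 \in p.1); case: (p.2 \subset edges (@cycle_adj n));
  case: [forall e in p.2, e \subset p.1]; case: (#|p.2| == k) => //.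
Qed.
End Wheel.

Import GRing.Theory.
Local Open Scope ring_scope.

Theorem mainTheorem8 (n : nat) : (3 <= n)%N ->
  forall k : nat,
    (1 + tutte (@wheel_adj n) (1 : {poly int}) 'X)`_k = (a_kn k n)%:R.
Proof.
move=> n3 k; exact: final n3 k.
Qed.
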